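(* Let $\mathcal{I}$ be an independent configuration of $d$ doors in which every door has the same fundamental distribution $p$, and let $A_{\mathrm{simp}}=(1,2,\dots,d)^\infty$ be the knock sequence that repeatedly knocks on doors $1,2,\dots,d$ in order. Let $X_1,\dots,X_d$ be i.i.d. positive-integer-valued random variables with $\Pr[X_i>n]=p(n)$ for all $n$. Then $$\mathbb{T}_{\mathcal{I}}(A_{\mathrm{simp}})=\Theta\big(d\cdot\mathbb{E}[\max\{X_1,\dots,X_d\}]\big),$$ with universal constants.
   Context: Doors $1,\dots,d$ ($d\ge2$) are initially closed and stay open once opened. In an independent configuration each door $i$ behaves independently of all other doors: $p(n)$ is the probability that a door is still closed after $n$ knocks on it ($p(0)=1$, $p$ non-increasing, $\sum_n p(n)<\infty$), and doors are mutually independent. A knock sequence is executed in order without any feedback; $\mathbb{T}_{\mathcal{I}}(\pi)$ denotes the expected number of knocks until all $d$ doors are open when running the sequence $\pi$. *)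

(* Defs.v *)
From HB Require Import structures.
From mathcomp Require Import all_boot all_order all_algebra.
From mathcomp Require Import all_classical all_reals all_analysis.
Set Implicit Arguments. Unset Strict Implicit. Unset Printing Implicit Defensive.
Import Order.TTheory GRing.Theory Num.Theory.
Local Open Scope ring_scope.
Local Open Scope ereal_scope.

(* Doors are labelled 0, ..., d-1.  A knock sequence is a function
   pi : nat -> nat, pi j being the door knocked at step j (0-indexed). *)

Definition knocks (pi : nat -> nat) (i t : nat) : nat :=
  (\sum_(j < t) (pi j == i))%N.

(* Expected number of knocks until all d doors are open, in an independent
   configuration where every door has closing-probability function p, when
   running pi.  Tail-sum formula E[tau] = sum_{t>=0} Pr[tau > t]; by
   independence Pr[tau > t] = 1 - prod_i (1 - p(#knocks on i in first t)). *)
Definition T_indep {R : realType} (d : nat) (p : nat -> R) (pi : nat -> nat)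
  : \bar R :=
  \sum_(t <oo) (1 - \prod_(i < d) (1 - p (knocks pi i t)))%:E.

(* The simple knock sequence (1,2,...,d)^infty (doors relabelled 0..d-1). *)
Definition A_simp (d : nat) : nat -> nat := fun j => (j %% d)%N.

(* E[max(X_1,...,X_d)] for X_i i.i.d. nonnegative-integer valued with
   Pr[X_i > n] = p n: tail sum  sum_{n>=0} Pr[max > n]
   = sum_n (1 - (1 - p n)^d). *)
Definition E_max {R : realType} (d : nat) (p : nat -> R) : \bar R :=
  \sum_(n <oo) (1 - (1 - p n) ^+ d)%:E.

Definition fundamental_distribution {R : realType} (p : nat -> R) : Prop :=
  [/\ p 0%N = 1%R,
      (forall n, 0 <= p n <= 1)%R,
      (forall n, p n.+1 <= p n)%R &
      \sum_(n <oo) (p n)%:E < +oo].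

(* Main.v *)
Require Import Defs.
From HB Require Import structures.
From mathcomp Require Import all_boot all_order all_algebra.
From mathcomp Require Import all_classical all_reals all_analysis.
From mathcomp Require Import lra ring.
Import Order.TTheory GRing.Theory Num.Theory.
Local Open Scope ring_scope.

Lemma knocks_simp d i t : (0 < d)%N -> (i < d)%N ->
  knocks (A_simp d) i t = (t %/ d + (i < t %% d))%N.
Proof.
move=> d0 id; elim: t => [|t IH].
  by rewrite /knocks big_ord0 div0n mod0n.
rewrite /knocks big_ord_recr /= -/(knocks _ _ _) IH /A_simp.
have rd : (t %% d < d)%N by rewrite ltn_mod.
have -> : t.+1 = (t %/ d * d + (t %% d).+1)%N by rewrite addnS -divn_eq.
have [rd1|rd1] := ltnP (t %% d).+1 d.
  rewrite divnMDl // (divn_small rd1) modnMDl (modn_small rd1) addn0.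
  rewrite -addnA; congr (_ + _)%N.
  case: (ltngtP i (t %% d)) => h.
  - by rewrite ltnS ltnW.
  - by rewrite ltnS leqNgt h.
  - by rewrite h ltnSn.
have e : (t %% d).+1 = d by apply/eqP; rewrite eqn_leq rd1 rd.
rewrite e -mulSnr mulnK // modnMl addn0.
have : (i <= t %% d)%N by rewrite -ltnS e.
rewrite leq_eqVlt => /orP[/eqP h|h].
  by rewrite h ltnn eqxx addn0 addn1.
by rewrite h eq_sym (ltn_eqF h) addn1 addn0.
Qed.

Lemma block_sum (R : realType) (a : nat -> R) d N :
  \sum_(0 <= t < d * N) a t = \sum_(0 <= m < N) \sum_(0 <= r < d) a (d * m + r)%N.
Proof.
elim: N => [|N IH]; first by rewrite muln0 !big_geq.
rewrite big_nat_recr //= -IH mulnS addnC (big_cat_nat _ (n := d * N)) //=; last first.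
  by rewrite leq_addr.
congr (_ + _).
rewrite -{1}(add0n (d * N)%N) big_addn addKn.
by apply: eq_bigr => r _; rewrite addnC.
Qed.

Lemma sum_pair (R : realType) (x : R) d : 0 <= x <= 1 ->
  (d%:R / 2) * (1 - x ^+ d) <= \sum_(r < d) (1 - x ^+ (d - r)).
Proof.
move=> /andP[x0 x1].
set S := \sum_(r < d) _.
have SE : S = \sum_(r < d) (1 - x ^+ r.+1).
  rewrite /S (reindex_inj rev_ord_inj) /=; apply: eq_bigr => r _.
  by rewrite subKn.
have : d%:R * (1 - x ^+ d) <= S + S.
  rewrite {2}SE /S -big_split /=.
  have -> : d%:R * (1 - x ^+ d) = \sum_(r < d) (1 - x ^+ d).
    by rewrite sumr_const card_ord mulr_natl.
  apply: ler_sum => r _.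
  have ha := exprn_ge0 (d - r) x0.
  have ha1 := exprn_ile1 (d - r) x0 x1.
  have hb := exprn_ge0 r.+1 x0.
  have hb1 := exprn_ile1 r.+1 x0 x1.
  have hd := exprn_ge0 d x0.
  have hab : x ^+ (d - r) * x ^+ r.+1 = x * x ^+ d.
    rewrite -exprD -exprS; congr (_ ^+ _).
    by rewrite addnS subnK // ltnW.
  nra.
move=> h; rewrite -mulrA mulrC; lra.
Qed.

Local Open Scope ereal_scope.
Lemma ser_le (R : realType) (u : nat -> \bar R) (M : \bar R) :
  (forall n, 0 <= u n) -> (forall N, \sum_(0 <= i < N) u i <= M) ->
  \sum_(i <oo) u i <= M.
Proof.
move=> u0 H; apply: lime_le.
  by apply: is_cvg_nneseries => n _ _; exact: u0.
by apply: nearW => N; exact: H.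
Qed.

Lemma ser_ge (R : realType) (u : nat -> \bar R) N :
  (forall n, 0 <= u n) -> \sum_(0 <= i < N) u i <= \sum_(i <oo) u i.
Proof. by move=> u0; apply: nneseries_lim_ge => n _ _; exact: u0. Qed.
Local Close Scope ereal_scope.

Section Main.
Variables (R : realType) (d : nat) (p : nat -> R).
Hypothesis d0 : (0 < d)%N.
Hypothesis fd : fundamental_distribution p.

Lemma p01 n : 0 <= p n <= 1.
Proof. by case: fd => _ h _ _; exact: h. Qed.

Lemma p_mono m n : (m <= n)%N -> p n <= p m.
Proof.
case: fd => _ _ h _; elim: n => [|n IH]; first by rewrite leqn0 => /eqP ->.
rewrite leq_eqVlt => /orP[/eqP -> //|]; rewrite ltnS => mn.
exact: le_trans (h n) (IH mn).
Qed.

Definition aa t := 1 - \prod_(i < d) (1 - p (knocks (A_simp d) i t)).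
Definition ff m := 1 - (1 - p m) ^+ d.

Lemma aa_eq m r : (r < d)%N ->
  aa (d * m + r) = 1 - \prod_(i < d) (1 - p (m + (i < r))%N).
Proof.
move=> rd; rewrite /aa; congr (_ - _); apply: eq_bigr => i _.
rewrite knocks_simp // mulnC divnMDl // (divn_small rd) addn0.
by rewrite modnMDl (modn_small rd).
Qed.

Lemma aa_upper m r : (r < d)%N -> aa (d * m + r) <= ff m.
Proof.
move=> rd; rewrite aa_eq // /ff lerD2l lerN2.
have -> : (1 - p m) ^+ d = \prod_(i < d) (1 - p m) by rewrite prodr_const card_ord.
apply: ler_prod => i _.
have := p01 m; have := p_mono m (m + (i < r))%N (leq_addr _ _).
move=> h /andP[h1 h2]; apply/andP; split; lra.
Qed.

Lemma aa_lower m r : (r < d)%N -> 1 - (1 - p m) ^+ (d - r) <= aa (d * m + r).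
Proof.
move=> rd; rewrite aa_eq // lerD2l lerN2.
rewrite -(big_mkord xpredT (fun i => 1 - p (m + (i < r))%N)).
rewrite (big_cat_nat _ (n := r)) //=; last exact: ltnW.
rewrite [X in _ * X](eq_big_nat _ _ (F2 := fun=> 1 - p m)); last first.
  by move=> i /andP[ri _]; rewrite ltnNge ri addn0.
rewrite prodr_const_nat; apply: ler_piMl.
  by apply: exprn_ge0; have := p01 m; move=> /andP[_ h]; lra.
apply: prodr_ile1 => i _; have := p01 (m + (i < r))%N; move=> /andP[h1 h2].
apply/andP; split; lra.
Qed.

Lemma aa_ge0 t : 0 <= aa t.
Proof.
rewrite /aa subr_ge0; apply: prodr_ile1 => i _.
have := p01 (knocks (A_simp d) i t); move=> /andP[h1 h2]; apply/andP; split; lra.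
Qed.

Lemma ff_ge0 m : 0 <= ff m.
Proof.
rewrite /ff subr_ge0; have := p01 m; move=> /andP[h1 h2].
apply: exprn_ile1; lra.
Qed.

End Main.

Local Open Scope ereal_scope.
Theorem mainTheorem3 (R : realType) :
  exists c1 c2 : R, (0 < c1)%R /\ (0 < c2)%R /\
  forall (d : nat) (p : nat -> R),
    (2 <= d)%N -> fundamental_distribution p ->
    ((c1 * d%:R)%:E * E_max d p <= T_indep d p (A_simp d)) /\
    (T_indep d p (A_simp d) <= (c2 * d%:R)%:E * E_max d p).
Proof.
exists (1/2)%R, 1%R; split; first lra; split; first lra.
move=> d p d2 fd.
have d0 : (0 < d)%N by apply: leq_trans d2.
have aa0 := aa_ge0 R d p fd; have ff0 := ff_ge0 R d p fd.
have -> : T_indep d p (A_simp d) = \sum_(t <oo) (aa R d p t)%:E by [].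
have -> : E_max d p = \sum_(m <oo) (ff R d p m)%:E by [].
split.
- rewrite -nneseriesZl; last by move=> i _; rewrite lee_fin.
  apply: ser_le => [n|N]; first by rewrite -EFinM lee_fin mulr_ge0 // mulr_ge0.
  under eq_bigr do rewrite -EFinM.
  rewrite sumEFin; apply: (le_trans _ (ser_ge _ (fun t => (aa R d p t)%:E) (d * N)%N _)); last first.
    by move=> n; rewrite lee_fin.
  rewrite sumEFin lee_fin block_sum; apply: ler_sum => m _.
  rewrite big_mkord.
  have h : (0 <= 1 - p m <= 1)%R.
    by have := p01 R p fd m; move=> /andP[h1 h2]; apply/andP; split; lra.
  apply: (le_trans _ (le_trans (sum_pair _ _ d h) _)).
    by rewrite /ff le_eqVlt; apply/orP; left; apply/eqP; field.
  by apply: ler_sum => r _; exact: aa_lower R d p d0 fd m r (ltn_ord r).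
- rewrite mul1r -nneseriesZl; last by move=> i _; rewrite lee_fin.
  apply: ser_le => [n|N]; first by rewrite lee_fin.
  rewrite sumEFin; apply: (le_trans _ (ser_ge _ (fun m => ((d%:R)%:E * (ff R d p m)%:E)) N _)); last first.
    by move=> n; rewrite -EFinM lee_fin mulr_ge0.
  under [X in _ <= X]eq_bigr do rewrite -EFinM.
  rewrite sumEFin lee_fin.
  apply: (@le_trans _ _ (\sum_(0 <= t < d * N) aa R d p t)%R).
    rewrite [X in (_ <= X)%R](big_cat_nat _ (n := N)) //=; last by rewrite leq_pmull.
    by rewrite lerDl sumr_ge0.
  rewrite block_sum; apply: ler_sum => m _.
  rewrite big_mkord.
  have -> : (d%:R * ff R d p m = \sum_(r < d) ff R d p m)%R by rewrite sumr_const card_ord mulr_natl.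
  by apply: ler_sum => r _; exact: aa_upper R d p d0 fd m r (ltn_ord r).
Qed.
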